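(* Let $x_1\le x_2\le\dots\le x_n$ and $y_1\le y_2\le\dots\le y_n$ be real numbers. Set $\mu=\frac1n\sum_{i=1}^n\delta_{x_i}$ and $\nu=\frac1n\sum_{i=1}^n\delta_{y_i}$, and let $\theta$ be a strictly convex cost function. The following are equivalent: (i) the map $i\mapsto x_i-y_i$ is non-decreasing; (ii) $\overline{\mathcal{T}}_\theta(\nu|\mu)=\mathcal{T}_\theta(\nu,\mu)$.
   Context: A cost function is an even convex function $\theta:\mathbb{R}\to[0,\infty)$ with $\theta(0)=0$. The weak transport cost is $$\overline{\mathcal{T}}_\theta(\nu|\mu)=\inf_\pi\int\theta\big(|x-\textstyle\int y\,p(x,dy)|\big)\,\mu(dx),$$ with the infimum over couplings $\pi(dx\,dy)=\mu(dx)p(x,dy)$ with marginals $\mu$ and $\nu$. The classical transport cost is $\mathcal{T}_\theta(\nu,\mu)=\inf_\pi\int\theta(|x-y|)\,d\pi$. *)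

(* Defs.v *)
From Stdlib Require Import Reals Lra.
Open Scope R_scope.

Fixpoint rsum (n : nat) (f : nat -> R) : R :=
  match n with O => 0 | S k => rsum k f + f k end.

Definition strictly_convex_cost (theta : R -> R) : Prop :=
  (forall x, 0 <= theta x) /\ theta 0 = 0 /\ (forall x, theta (- x) = theta x) /\
  (forall a b t, a <> b -> 0 < t < 1 ->
     theta (t * a + (1 - t) * b) < t * theta a + (1 - t) * theta b).

(* Couplings of mu = 1/n sum delta_{x_i} and nu = 1/n sum delta_{y_j}, parametrised
   by a matrix P : pi = sum_{i,j} P i j delta_{(x_i,y_j)}.  Every coupling of the
   two measures arises this way (atoms may be repeated). *)
Definition is_coupling (n : nat) (P : nat -> nat -> R) : Prop :=
  (forall i j, (i < n)%nat -> (j < n)%nat -> 0 <= P i j) /\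
  (forall i, (i < n)%nat -> rsum n (fun j => P i j) = / INR n) /\
  (forall j, (j < n)%nat -> rsum n (fun i => P i j) = / INR n).

Definition classical_cost (theta : R -> R) (n : nat) (x y : nat -> R)
  (P : nat -> nat -> R) : R :=
  rsum n (fun i => rsum n (fun j => P i j * theta (Rabs (x i - y j)))).

Definition mu_mass (n : nat) (x : nat -> R) (a : R) : R :=
  rsum n (fun k => if Req_EM_T (x k) a then / INR n else 0).

(* barycenter int y p(a,dy) of the disintegration kernel of pi at the point a:
   (int_{ {a} x R } y dpi) / mu({a}) *)
Definition kernel_bary (n : nat) (x y : nat -> R) (P : nat -> nat -> R) (a : R) : R :=
  rsum n (fun k => if Req_EM_T (x k) a then rsum n (fun j => P k j * y j) else 0)
  / mu_mass n x a.

Definition weak_cost (theta : R -> R) (n : nat) (x y : nat -> R)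
  (P : nat -> nat -> R) : R :=
  rsum n (fun i => / INR n * theta (Rabs (x i - kernel_bary n x y P (x i)))).

Definition is_inf (S : R -> Prop) (m : R) : Prop :=
  (forall s, S s -> m <= s) /\ (forall b, (forall s, S s -> b <= s) -> b <= m).

Definition weak_values theta n x y : R -> Prop :=
  fun c => exists P, is_coupling n P /\ c = weak_cost theta n x y P.
Definition classical_values theta n x y : R -> Prop :=
  fun c => exists P, is_coupling n P /\ c = classical_cost theta n x y P.

(* Main.v *)
Require Import Defs.
From Stdlib Require Import Reals.
Open Scope R_scope.
From Stdlib Require Import Reals Lra Lia Psatz.
Open Scope R_scope.

Lemma rsum_ext n f g : (forall k, (k < n)%nat -> f k = g k) -> rsum n f = rsum n g.
Proof. induction n; simpl; intros H; auto. rewrite IHn by (intros; apply H; lia). rewrite H by lia. reflexivity. Qed.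

Lemma rsum_le n f g : (forall k, (k < n)%nat -> f k <= g k) -> rsum n f <= rsum n g.
Proof. induction n; simpl; intros H. lra. apply Rplus_le_compat. apply IHn; intros; apply H; lia. apply H; lia. Qed.

Lemma rsum_plus n f g : rsum n (fun k => f k + g k) = rsum n f + rsum n g.
Proof. induction n; simpl. ring. rewrite IHn; ring. Qed.

Lemma rsum_minus n f g : rsum n (fun k => f k - g k) = rsum n f - rsum n g.
Proof. induction n; simpl. ring. rewrite IHn; ring. Qed.

Lemma rsum_scal n a f : rsum n (fun k => a * f k) = a * rsum n f.
Proof. induction n; simpl. ring. rewrite IHn; ring. Qed.

Lemma rsum_zero n f : (forall k, (k<n)%nat -> f k = 0) -> rsum n f = 0.
Proof. induction n; simpl; intros H. auto. rewrite IHn by (intros; apply H; lia). rewrite H by lia. ring. Qed.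

Lemma rsum_swap n m f : rsum n (fun i => rsum m (fun j => f i j)) = rsum m (fun j => rsum n (fun i => f i j)).
Proof. induction n; simpl. symmetry; apply rsum_zero; auto. rewrite IHn. rewrite <- rsum_plus. reflexivity. Qed.

Lemma rsum_ge_term n f a : (forall k, (k<n)%nat -> 0 <= f k) -> (a < n)%nat -> f a <= rsum n f.
Proof. induction n; simpl; intros H Ha. lia.
  destruct (Nat.eq_dec a n). subst.
  assert (0 <= rsum n f). { replace 0 with (rsum n (fun _ => 0)) by (apply rsum_zero; auto). apply rsum_le. intros; apply H; lia. }
  lra. assert (f a <= rsum n f) by (apply IHn; [intros; apply H; lia| lia]). pose proof (H n ltac:(lia)). lra. Qed.

Definition dl (i j : nat) : R := if Nat.eqb i j then 1 else 0.
Lemma dl_sym i j : dl i j = dl j i.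
Proof. unfold dl; rewrite Nat.eqb_sym; auto. Qed.

Lemma rsum_dl n a f : (a < n)%nat -> rsum n (fun k => dl k a * f k) = f a.
Proof. induction n; intros H; simpl. lia.
  change (dl n a) with (if Nat.eqb n a then 1 else 0).
  destruct (Nat.eqb_spec n a). subst. rewrite rsum_zero. ring. intros k Hk. unfold dl. destruct (Nat.eqb_spec k a); [lia|ring].
  rewrite IHn by lia. ring. Qed.

Lemma lin5 n f p0 p1 p2 p3 p4 u0 u1 u2 u3 u4 :
  (p0 < n)%nat -> (p1 < n)%nat -> (p2 < n)%nat -> (p3 < n)%nat -> (p4 < n)%nat ->
  rsum n (fun j => u0*(dl j p0 * f j) + u1*(dl j p1*f j) + u2*(dl j p2*f j) - u3*(dl j p3*f j) - u4*(dl j p4*f j))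
  = u0 * f p0 + u1 * f p1 + u2 * f p2 - u3 * f p3 - u4 * f p4.
Proof. intros. rewrite !rsum_minus, !rsum_plus, !rsum_scal, !rsum_dl by auto. reflexivity. Qed.

Lemma chord_strict th (H : strictly_convex_cost th) p v s :
  p < v < s -> (s - p) * th v < (s - v) * th p + (v - p) * th s.
Proof.
  intros [H1 H2]. destruct H as [_ [_ [_ Hc]]].
  set (t := (s - v) / (s - p)).
  assert (Ht : 0 < t < 1). { unfold t; split. apply Rdiv_lt_0_compat; lra.
    apply Rmult_lt_reg_r with (s-p); [lra|]. unfold Rdiv; rewrite Rmult_assoc, Rinv_l; lra. }
  assert (Hv : t * p + (1 - t) * s = v). { unfold t; field; lra. }
  specialize (Hc p s t ltac:(lra) Ht). rewrite Hv in Hc.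
  assert (Ht2 : (s - p) * t = s - v) by (unfold t; field; lra).
  apply Rmult_lt_compat_l with (r := s - p) in Hc; [|lra].
  replace ((s - v) * th p + (v - p) * th s) with ((s - p) * (t * th p + (1 - t) * th s)). exact Hc.
  transitivity ((s-p)*t*th p + (s-p)*th s - (s-p)*t*th s); [ring| rewrite Ht2; ring].
Qed.

Lemma chord th (H : strictly_convex_cost th) p v s :
  p <= v <= s -> (s - p) * th v <= (s - v) * th p + (v - p) * th s.
Proof.
  intros [H1 H2]. destruct (Req_dec v p). subst. lra. destruct (Req_dec v s). subst. lra.
  apply Rlt_le, chord_strict; auto; lra. Qed.

Lemma four th (H : strictly_convex_cost th) p q r s :
  p <= q <= s -> p <= r <= s -> q + r = p + s -> th q + th r <= th p + th s.
Proof.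
  intros Hq Hr E. destruct (Req_dec p s).
  - assert (q = p) by lra. assert (r = p) by lra. subst. lra.
  - pose proof (chord th H p q s Hq). pose proof (chord th H p r s Hr).
    apply Rmult_le_reg_l with (s - p); [lra|].
    assert (r = p + s - q) by lra. subst r. lra.
Qed.

Lemma four_strict th (H : strictly_convex_cost th) p q r s :
  p < q < s -> p <= r <= s -> q + r = p + s -> th q + th r < th p + th s.
Proof.
  intros Hq Hr E.
  pose proof (chord_strict th H p q s Hq). pose proof (chord th H p r s Hr).
  apply Rmult_lt_reg_l with (s - p); [lra|].
  assert (r = p + s - q) by lra. subst r. lra.
Qed.
Lemma div_le_r a h u : 0 < h -> a <= u * h -> a / h <= u.
Proof. intros. apply Rmult_le_reg_r with h; auto. unfold Rdiv. rewrite Rmult_assoc, Rinv_l by lra. lra. Qed.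
Lemma div_ge_r a h u : 0 < h -> u * h <= a -> u <= a / h.
Proof. intros. apply Rmult_le_reg_r with h; auto. unfold Rdiv. rewrite Rmult_assoc, Rinv_l by lra. lra. Qed.
Lemma div_le_inv a h u : 0 < h -> a / h <= u -> a <= u * h.
Proof. intros. replace a with (a / h * h) by (field; lra). apply Rmult_le_compat_r; lra. Qed.
Lemma le_div_inv a h u : 0 < h -> u <= a / h -> u * h <= a.
Proof. intros. replace a with (a / h * h) by (field; lra). apply Rmult_le_compat_r; lra. Qed.

Definition lq th z (q : R) := exists h, 0 < h /\ q = (th z - th (z - h)) / h.

Lemma lq_bound th (H : strictly_convex_cost th) z : bound (lq th z).
Proof. exists (th (z+1) - th z). intros q [h [Hh ->]].
  pose proof (chord th H (z-h) z (z+1) ltac:(lra)). apply div_le_r; auto. lra. Qed.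

Lemma lq_ne th z : exists q, lq th z q.
Proof. exists ((th z - th (z-1))/1). exists 1. split; auto; lra. Qed.

Definition sg th (H : strictly_convex_cost th) z : R :=
  proj1_sig (completeness (lq th z) (lq_bound th H z) (lq_ne th z)).

Lemma sg_lub th (H : strictly_convex_cost th) z : is_lub (lq th z) (sg th H z).
Proof. unfold sg. apply (proj2_sig (completeness (lq th z) (lq_bound th H z) (lq_ne th z))). Qed.

Lemma sg_le_slope th (H : strictly_convex_cost th) z0 z : z0 < z -> sg th H z0 * (z - z0) <= th z - th z0.
Proof. intros Hz. apply le_div_inv; [lra|]. destruct (sg_lub th H z0) as [_ Hl]. apply Hl.
  intros q [h [Hh ->]]. apply div_le_r; auto.
  pose proof (chord th H (z0-h) z0 z ltac:(lra)).
  apply Rmult_le_reg_r with (z - z0); [lra|].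
  unfold Rdiv. replace ((th z - th z0) * / (z - z0) * h * (z - z0)) with ((th z - th z0) * h) by (field; lra).
  lra. Qed.

Lemma slope_le_sg th (H : strictly_convex_cost th) z0 z : z < z0 -> th z0 - th z <= sg th H z0 * (z0 - z).
Proof. intros Hz. apply div_le_inv; [lra|]. destruct (sg_lub th H z0) as [Hu _]. apply Hu.
  exists (z0 - z). split; [lra|]. replace (z0 - (z0 - z)) with z by ring. reflexivity. Qed.

Lemma sg_tangent th (H : strictly_convex_cost th) z0 z : th z0 + sg th H z0 * (z - z0) <= th z.
Proof. destruct (Rtotal_order z z0) as [Hlt|[Heq|Hgt]].
  - pose proof (slope_le_sg th H z0 z Hlt). lra.
  - subst. lra.
  - pose proof (sg_le_slope th H z0 z Hgt). lra. Qed.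

Lemma sg_mono th (H : strictly_convex_cost th) z1 z2 : z1 <= z2 -> sg th H z1 <= sg th H z2.
Proof. intros Hz. destruct (Req_dec z1 z2). subst; lra.
  pose proof (sg_le_slope th H z1 z2 ltac:(lra)). pose proof (slope_le_sg th H z2 z1 ltac:(lra)).
  apply Rmult_le_reg_r with (z2 - z1); lra. Qed.

Lemma jensen th (H : strictly_convex_cost th) n w z : (forall k, (k < n)%nat -> 0 <= w k) -> rsum n w = 1 ->
  th (rsum n (fun k => w k * z k)) <= rsum n (fun k => w k * th (z k)).
Proof. intros Hw Hs. set (z0 := rsum n (fun k => w k * z k)). set (s := sg th H z0).
  apply Rle_trans with (rsum n (fun k => w k * (th z0 + s * (z k - z0)))).
  - rewrite (rsum_ext n _ (fun k => th z0 * w k + s * (w k * z k) - (s * z0) * w k)) by (intros; ring).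
    rewrite rsum_minus, rsum_plus, !rsum_scal, Hs. fold z0. lra.
  - apply rsum_le. intros k Hk. apply Rmult_le_compat_l; auto. apply sg_tangent. Qed.

Lemma th_abs th (H : strictly_convex_cost th) z : th (Rabs z) = th z.
Proof. destruct H as [_ [_ [He _]]]. unfold Rabs. destruct (Rcase_abs z); auto. Qed.
Definition w (x : nat -> R) i k : R := if Req_EM_T (x k) (x i) then 1 else 0.
Definition NN n x i := rsum n (w x i).
Definition cc n (y : nat -> R) (P : nat -> nat -> R) k := INR n * rsum n (fun j => P k j * y j).

Lemma w_pos x i k : 0 <= w x i k.
Proof. unfold w; destruct Req_EM_T; lra. Qed.

Lemma NN_pos n x i : (i < n)%nat -> 0 < NN n x i.
Proof. intros. unfold NN. apply Rlt_le_trans with (w x i i).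
  unfold w; destruct Req_EM_T; [lra|congruence]. apply rsum_ge_term; auto. intros; apply w_pos. Qed.

Lemma w_eq x i k l : x k = x i -> w x i l = w x k l.
Proof. intros E. unfold w. rewrite E. reflexivity. Qed.

Lemma NN_eq n x i k : x k = x i -> NN n x i = NN n x k.
Proof. intros E. unfold NN. apply rsum_ext. intros; apply w_eq; auto. Qed.

Lemma rowsum n x i : (i < n)%nat -> rsum n (fun k => w x i k / NN n x i) = 1.
Proof. intros. pose proof (NN_pos n x i H).
  rewrite (rsum_ext n _ (fun k => / NN n x i * w x i k)) by (intros; unfold Rdiv; ring).
  rewrite rsum_scal. fold (NN n x i). field. lra. Qed.

Lemma colsum n x k : (k < n)%nat -> rsum n (fun i => w x i k / NN n x i) = 1.
Proof. intros. rewrite (rsum_ext n _ (fun i => w x k i / NN n x k)). apply rowsum; auto.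
  intros i Hi. unfold w at 1 2. destruct (Req_EM_T (x k) (x i)); destruct (Req_EM_T (x i) (x k)); try congruence.
  rewrite (NN_eq n x i k); auto. unfold Rdiv; ring. Qed.

Lemma double_avg n x h : rsum n (fun i => rsum n (fun k => w x i k / NN n x i * h k)) = rsum n h.
Proof. rewrite rsum_swap. apply rsum_ext. intros k Hk.
  rewrite (rsum_ext n _ (fun i => h k * (w x i k / NN n x i))) by (intros; ring).
  rewrite rsum_scal, colsum; auto; ring. Qed.

Lemma bary_eq n x y P i : (i < n)%nat ->
  kernel_bary n x y P (x i) = rsum n (fun k => w x i k / NN n x i * cc n y P k).
Proof. intros Hi. pose proof (NN_pos n x i Hi). assert (Hn : 0 < INR n) by (apply lt_0_INR; lia).
  unfold kernel_bary, mu_mass.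
  rewrite (rsum_ext n (fun k => if Req_EM_T (x k) (x i) then rsum n (fun j => P k j * y j) else 0)
    (fun k => w x i k * rsum n (fun j => P k j * y j))) by (intros; unfold w; destruct Req_EM_T; ring).
  rewrite (rsum_ext n (fun k => if Req_EM_T (x k) (x i) then / INR n else 0)
    (fun k => / INR n * w x i k)) by (intros; unfold w; destruct Req_EM_T; ring).
  rewrite rsum_scal. fold (NN n x i).
  rewrite (rsum_ext n (fun k => w x i k / NN n x i * cc n y P k)
     (fun k => (INR n / NN n x i) * (w x i k * rsum n (fun j => P k j * y j)))) by (intros; unfold cc; field; lra).
  rewrite rsum_scal. field. lra. Qed.

Lemma x_avg n x i : (i < n)%nat -> x i = rsum n (fun k => w x i k / NN n x i * x k).
Proof. intros Hi. rewrite (rsum_ext n _ (fun k => x i * (w x i k / NN n x i))).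
  rewrite rsum_scal, rowsum; auto; ring.
  intros k Hk. unfold w. destruct Req_EM_T. rewrite e; ring. unfold Rdiv; ring. Qed.

Definition C0 th n (x y : nat -> R) := rsum n (fun i => / INR n * th (x i - y i)).
Definition UU th n x y P := rsum n (fun k => / INR n * th (x k - cc n y P k)).

Lemma weak_le_U th (H : strictly_convex_cost th) n x y P : (0 < n)%nat ->
  weak_cost th n x y P <= UU th n x y P.
Proof. intros Hn0. assert (Hn : 0 < INR n) by (apply lt_0_INR; lia). unfold weak_cost, UU.
  apply Rle_trans with (rsum n (fun i => / INR n * rsum n (fun k => w x i k / NN n x i * th (x k - cc n y P k)))).
  - apply rsum_le. intros i Hi. rewrite th_abs by auto. apply Rmult_le_compat_l. left; apply Rinv_0_lt_compat; auto.
    rewrite bary_eq by auto. rewrite (x_avg n x i Hi) at 1.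
    rewrite <- rsum_minus.
    rewrite (rsum_ext n _ (fun k => w x i k / NN n x i * (x k - cc n y P k))) by (intros; ring).
    apply jensen; auto. intros k Hk. pose proof (NN_pos n x i Hi). unfold Rdiv. apply Rmult_le_pos. apply w_pos. left; apply Rinv_0_lt_compat; auto.
    apply rowsum; auto.
  - rewrite rsum_scal, double_avg, <- rsum_scal. lra. Qed.
Lemma coupling_pot n P F G : (0 < n)%nat -> is_coupling n P ->
  rsum n (fun i => rsum n (fun j => P i j * (F i + G j))) = / INR n * (rsum n F + rsum n G).
Proof. intros Hn0 [_ [Hr Hc]].
  rewrite (rsum_ext n _ (fun i => F i * rsum n (fun j => P i j) + rsum n (fun j => P i j * G j))).
  2:{ intros i Hi. rewrite <- rsum_scal, <- rsum_plus. apply rsum_ext; intros; ring. }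
  rewrite rsum_plus. rewrite (rsum_swap n n (fun i j => P i j * G j)).
  rewrite (rsum_ext n (fun i => F i * rsum n (fun j => P i j)) (fun i => / INR n * F i)) by (intros; rewrite Hr; auto; ring).
  rewrite (rsum_ext n (fun j => rsum n (fun i => P i j * G j)) (fun j => / INR n * G j)).
  2:{ intros j Hj. rewrite (rsum_ext n _ (fun i => G j * P i j)) by (intros; ring). rewrite rsum_scal, Hc; auto; ring. }
  rewrite !rsum_scal. ring. Qed.



Definition cm (th : R -> R) (x y : nat -> R) (i j : nat) : R := th (x i - y j).
Definition Fm (th : R -> R) (x y : nat -> R) (i : nat) : R := rsum i (fun k => cm th x y (S k) k - cm th x y k k).

Lemma monge th (H : strictly_convex_cost th) n x y
  (Hx : forall i j, (i <= j)%nat -> (j < n)%nat -> x i <= x j)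
  (Hy : forall i j, (i <= j)%nat -> (j < n)%nat -> y i <= y j) i i' j j' :
  (i <= i')%nat -> (i' < n)%nat -> (j <= j')%nat -> (j' < n)%nat ->
  cm th x y i j + cm th x y i' j' <= cm th x y i j' + cm th x y i' j.
Proof. intros. unfold cm. pose proof (Hx i i' H0 H1). pose proof (Hy j j' H2 H3).
  apply four; auto; lra. Qed.

Lemma classical_ge th (H : strictly_convex_cost th) n x y P (Hn : (0 < n)%nat)
  (Hx : forall i j, (i <= j)%nat -> (j < n)%nat -> x i <= x j)
  (Hy : forall i j, (i <= j)%nat -> (j < n)%nat -> y i <= y j) :
  is_coupling n P -> C0 th n x y <= classical_cost th n x y P.
Proof. intros HP.
  set (F := Fm th x y). set (G := fun j => cm th x y j j - F j).
  assert (P1 : forall j i, (j <= i)%nat -> (i < n)%nat -> F i - F j <= cm th x y i j - cm th x y j j).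
  { intros j i. induction i; intros Hji Hi.
    - assert (j = 0%nat) by lia. subst. lra.
    - destruct (Nat.eq_dec j (S i)). subst. lra.
      specialize (IHi ltac:(lia) ltac:(lia)).
      pose proof (monge th H n x y Hx Hy i (S i) j i ltac:(lia) Hi ltac:(lia) ltac:(lia)).
      unfold F, Fm in *. simpl. lra. }
  assert (P2 : forall i j, (i <= j)%nat -> (j < n)%nat -> F i - F j <= cm th x y i j - cm th x y j j).
  { intros i j. induction j; intros Hij Hj.
    - assert (i = 0%nat) by lia. subst. lra.
    - destruct (Nat.eq_dec i (S j)). subst. lra.
      specialize (IHj ltac:(lia) ltac:(lia)).
      pose proof (monge th H n x y Hx Hy i (S j) j (S j) ltac:(lia) Hj ltac:(lia) Hj).
      unfold F, Fm in *. simpl. lra. }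
  destruct HP as [Hpos Hrc].
  apply Rle_trans with (rsum n (fun i => rsum n (fun j => P i j * (F i + G j)))).
  - rewrite coupling_pot; auto. 2: split; auto. unfold C0. rewrite <- rsum_plus, rsum_scal.
    right. f_equal. apply rsum_ext. intros. unfold G, cm. ring.
  - unfold classical_cost. apply rsum_le; intros i Hi. apply rsum_le; intros j Hj.
    apply Rmult_le_compat_l. apply Hpos; auto. rewrite th_abs by auto. fold (cm th x y i j).
    unfold G. destruct (Compare_dec.le_lt_dec j i).
    + pose proof (P1 j i l Hi). lra.
    + pose proof (P2 i j ltac:(lia) Hj). lra.
Qed.
Lemma weak_ge th (H : strictly_convex_cost th) n x y P (Hn : (0 < n)%nat)
  (Hx : forall i j, (i <= j)%nat -> (j < n)%nat -> x i <= x j)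
  (Hy : forall i j, (i <= j)%nat -> (j < n)%nat -> y i <= y j)
  (Hm : forall i j, (i <= j)%nat -> (j < n)%nat -> x i - y i <= x j - y j) :
  is_coupling n P -> C0 th n x y <= weak_cost th n x y P.
Proof. intros HP. assert (HnR : 0 < INR n) by (apply lt_0_INR; lia).
  set (s := fun k => sg th H (x k - y k)).
  set (al := fun i => rsum i (fun l => (s (S l) - s l) * y l)).
  set (A := fun i v => al i - s i * v).
  set (F := fun i => th (x i - y i) + s i * y i - al i).
  assert (AS : forall k v, A (S k) v = A k v + (s (S k) - s k) * (y k - v)).
  { intros. unfold A, al. simpl. ring. }
  assert (smono : forall k, (S k < n)%nat -> s k <= s (S k)).
  { intros. unfold s. apply sg_mono. apply Hm; lia. }
  assert (M1 : forall v j i, (j <= i)%nat -> (i < n)%nat -> (forall l, (j <= l)%nat -> (l < i)%nat -> v <= y l) -> A j v <= A i v).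
  { intros v j i. induction i; intros Hji Hi Hl.
    - assert (j = 0%nat) by lia. subst; lra.
    - destruct (Nat.eq_dec j (S i)). subst; lra.
      rewrite AS. specialize (IHi ltac:(lia) ltac:(lia) ltac:(intros; apply Hl; lia)).
      pose proof (smono i Hi). pose proof (Hl i ltac:(lia) ltac:(lia)). nra. }
  assert (M2 : forall v i j, (i <= j)%nat -> (j < n)%nat -> (forall l, (l < j)%nat -> y l <= v) -> A j v <= A i v).
  { intros v i j. induction j; intros Hij Hj Hl.
    - assert (i = 0%nat) by lia. subst; lra.
    - destruct (Nat.eq_dec i (S j)). subst; lra.
      rewrite AS. specialize (IHj ltac:(lia) ltac:(lia) ltac:(intros; apply Hl; lia)).
      pose proof (smono j Hj). pose proof (Hl j ltac:(lia)). nra. }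
  assert (M : forall i j, (i < n)%nat -> (j < n)%nat -> A j (y j) <= A i (y j)).
  { intros i j Hi Hj. destruct (Compare_dec.le_lt_dec j i).
    - apply M1; auto. intros; apply Hy; lia.
    - apply M2; auto. lia. intros; apply Hy; lia. }
  assert (GY : forall i k, (i <= k)%nat -> (k < n)%nat -> x i = x k -> y i = y k).
  { intros. pose proof (Hy i k H0 H1). pose proof (Hm i k H0 H1). lra. }
  assert (GS : forall i k, (i <= k)%nat -> (k < n)%nat -> x i = x k -> s i = s k).
  { intros. unfold s. rewrite (GY i k), H2; auto. }
  assert (GA : forall i k, (i <= k)%nat -> (k < n)%nat -> x i = x k -> al i = al k).
  { intros i k. induction k; intros Hik Hk E.
    - assert (i = 0%nat) by lia. subst; auto.
    - destruct (Nat.eq_dec i (S k)). subst; auto.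
      assert (Exk : x k = x i). { pose proof (Hx i k ltac:(lia) ltac:(lia)). pose proof (Hx k (S k) ltac:(lia) Hk). lra. }
      rewrite IHk by (auto; lia). unfold al at 2. simpl. fold (al k).
      rewrite (GS k (S k)) by (auto; lra). ring. }
  assert (GAs : forall i k, (i < n)%nat -> (k < n)%nat -> x k = x i -> A i = A k).
  { intros. unfold A. destruct (Compare_dec.le_lt_dec i k).
    - rewrite (GA i k), (GS i k); auto.
    - rewrite (GA k i), (GS k i); auto; lia. }
  destruct HP as [Hpos [Hr Hc]].
  apply Rle_trans with (rsum n (fun i => / INR n * (F i + A i (kernel_bary n x y P (x i))))).
  2:{ unfold weak_cost. apply rsum_le. intros i Hi. apply Rmult_le_compat_l. left; apply Rinv_0_lt_compat; auto.
      rewrite th_abs by auto. pose proof (sg_tangent th H (x i - y i) (x i - kernel_bary n x y P (x i))).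
      unfold F, A. fold (s i) in H0. lra. }
  rewrite rsum_scal, rsum_plus.
  assert (S3 : rsum n (fun i => A i (kernel_bary n x y P (x i))) = rsum n (fun k => A k (cc n y P k))).
  { rewrite <- (double_avg n x (fun k => A k (cc n y P k))). apply rsum_ext. intros i Hi.
    rewrite bary_eq by auto.
    rewrite (rsum_ext n (fun k => w x i k / NN n x i * A k (cc n y P k)) (fun k => al i * (w x i k / NN n x i) - s i * (w x i k / NN n x i * cc n y P k))).
    rewrite rsum_minus, !rsum_scal, rowsum by auto. unfold A. ring.
    intros k Hk. unfold w. destruct (Req_EM_T (x k) (x i)).
    - rewrite <- (GAs i k); auto. unfold A. ring.
    - unfold Rdiv. ring. }
  rewrite S3.
  assert (S4 : rsum n (fun j => A j (y j)) <= rsum n (fun k => A k (cc n y P k))).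
  { apply Rle_trans with (rsum n (fun k => rsum n (fun j => INR n * P k j * A j (y j)))).
    - rewrite rsum_swap. right. apply rsum_ext. intros j Hj.
      rewrite (rsum_ext n _ (fun k => (INR n * A j (y j)) * P k j)) by (intros; ring).
      rewrite rsum_scal, Hc by auto. field. lra.
    - apply rsum_le. intros k Hk.
      apply Rle_trans with (rsum n (fun j => INR n * P k j * A k (y j))).
      + apply rsum_le. intros j Hj. apply Rmult_le_compat_l. apply Rmult_le_pos; [lra| apply Hpos; auto]. apply M; auto.
      + right. unfold A, cc.
        rewrite (rsum_ext n _ (fun j => (INR n * al k) * P k j - (INR n * s k) * (P k j * y j))) by (intros; ring).
        rewrite rsum_minus, !rsum_scal, Hr by auto. field. lra. }
  unfold C0. rewrite rsum_scal.
  apply Rmult_le_compat_l. left; apply Rinv_0_lt_compat; auto.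
  replace (rsum n (fun i => th (x i - y i))) with (rsum n F + rsum n (fun j => A j (y j))). lra.
  rewrite <- rsum_plus. apply rsum_ext. intros. unfold F, A. ring.
Qed.
Definition Pid n (i j : nat) : R := / INR n * dl j i.

Lemma rsum_dl1 n a : (a < n)%nat -> rsum n (fun k => dl k a) = 1.
Proof. intros. rewrite (rsum_ext n _ (fun k => dl k a * 1)) by (intros; ring). apply rsum_dl; auto. Qed.

Lemma Pid_coupling n : (0 < n)%nat -> is_coupling n (Pid n).
Proof. intros Hn. assert (HnR : 0 < INR n) by (apply lt_0_INR; lia). unfold Pid. split; [|split].
  - intros. apply Rmult_le_pos. left; apply Rinv_0_lt_compat; auto. unfold dl; destruct Nat.eqb; lra.
  - intros. rewrite rsum_scal, rsum_dl1; auto; ring.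
  - intros. rewrite rsum_scal. rewrite (rsum_ext n _ (fun k => dl k j)) by (intros; apply dl_sym). rewrite rsum_dl1; auto; ring. Qed.

Lemma classical_Pid th (H : strictly_convex_cost th) n x y : classical_cost th n x y (Pid n) = C0 th n x y.
Proof. unfold classical_cost, C0, Pid. apply rsum_ext. intros i Hi.
  rewrite (rsum_ext n _ (fun j => dl j i * (/ INR n * th (Rabs (x i - y j))))) by (intros; ring).
  rewrite rsum_dl by auto. rewrite th_abs; auto. Qed.

Lemma U_Pid th n x y : (0 < n)%nat -> UU th n x y (Pid n) = C0 th n x y.
Proof. intros Hn. assert (HnR : 0 < INR n) by (apply lt_0_INR; lia). unfold UU, C0. apply rsum_ext. intros k Hk.
  unfold cc, Pid. rewrite (rsum_ext n _ (fun j => / INR n * (dl j k * y j))) by (intros; ring).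
  rewrite rsum_scal, rsum_dl by auto. f_equal. f_equal. field. lra. Qed.

Lemma mono_consec n d : (forall k, (S k < n)%nat -> d k <= d (S k)) ->
  forall i j, (i <= j)%nat -> (j < n)%nat -> d i <= d j.
Proof. intros Hc i j. induction j; intros Hij Hj.
  - assert (i = 0%nat) by lia. subst; lra.
  - destruct (Nat.eq_dec i (S j)). subst; lra.
    pose proof (IHj ltac:(lia) ltac:(lia)). pose proof (Hc j Hj). lra. Qed.

Lemma dl_refl i : dl i i = 1.
Proof. unfold dl; rewrite Nat.eqb_refl; auto. Qed.
Lemma dl_neq i j : i <> j -> dl i j = 0.
Proof. intros; unfold dl. replace (Nat.eqb i j) with false; auto. symmetry; apply Nat.eqb_neq; auto. Qed.

Lemma perturb th (H : strictly_convex_cost th) n x y a (Hn : (0 < n)%nat)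
  (Hx : forall i j, (i <= j)%nat -> (j < n)%nat -> x i <= x j)
  (Hy : forall i j, (i <= j)%nat -> (j < n)%nat -> y i <= y j) :
  (S a < n)%nat -> x (S a) - y (S a) < x a - y a ->
  exists P, is_coupling n P /\ UU th n x y P < C0 th n x y.
Proof. intros Ha Hd. set (b := S a). fold b in Hd, Ha.
  assert (HnR : 0 < INR n) by (apply lt_0_INR; lia).
  assert (Hab : a <> b) by (unfold b; lia).
  assert (Han : (a < n)%nat) by (unfold b in *; lia).
  pose proof (Hx a b ltac:(unfold b; lia) Ha) as Hxab.
  set (D := y b - y a). assert (HD : 0 < D) by (unfold D; lra).
  set (e := ((x a - y a) - (x b - y b)) / (2 * D)).
  assert (He : 0 < e) by (unfold e; apply Rdiv_lt_0_compat; lra).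
  assert (HeD : e * D = ((x a - y a) - (x b - y b)) / 2) by (unfold e; field; lra).
  assert (He1 : e <= 1/2). { apply Rmult_le_reg_r with D; auto. rewrite HeD. unfold D. lra. }
  set (Pp := fun i j => / INR n * (dl i j + e * (dl i a * dl j b + dl i b * dl j a - dl i a * dl j a - dl i b * dl j b))).
  assert (dl01 : forall i j, dl i j = 0 \/ dl i j = 1) by (intros; unfold dl; destruct Nat.eqb; auto).
  assert (gen : forall i f, (i < n)%nat -> rsum n (fun j => Pp i j * f j) = / INR n * (f i + e * (dl i a * f b + dl i b * f a - dl i a * f a - dl i b * f b))).
  { intros i f Hi. unfold Pp.
    rewrite (rsum_ext n _ (fun j => (/INR n)*(dl j i * f j) + (/INR n*e*dl i a)*(dl j b*f j) + (/INR n*e*dl i b)*(dl j a*f j) - (/INR n*e*dl i a)*(dl j a*f j) - (/INR n*e*dl i b)*(dl j b*f j))).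
    rewrite lin5 by (unfold b in *; lia). ring. intros. rewrite (dl_sym i k). ring. }
  exists Pp. split; [split; [|split]|].
  - intros i j Hi Hj. unfold Pp. apply Rmult_le_pos. left; apply Rinv_0_lt_compat; auto.
    unfold dl. destruct (Nat.eqb_spec i j), (Nat.eqb_spec i a), (Nat.eqb_spec i b), (Nat.eqb_spec j a), (Nat.eqb_spec j b); try lia; lra.
  - intros i Hi. rewrite (rsum_ext n _ (fun j => Pp i j * 1)) by (intros; ring). rewrite gen by auto. ring.
  - intros j Hj. unfold Pp.
    rewrite (rsum_ext n _ (fun i => (/INR n)*(dl i j * 1) + (/INR n*e*dl j b)*(dl i a*1) + (/INR n*e*dl j a)*(dl i b*1) - (/INR n*e*dl j a)*(dl i a*1) - (/INR n*e*dl j b)*(dl i b*1))).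
    rewrite lin5 by (unfold b in *; lia). ring. intros. ring.
  - set (g := fun k => / INR n * th (x k - cc n y Pp k) - / INR n * th (x k - y k)).
    assert (Hcc : forall k, (k < n)%nat -> cc n y Pp k = y k + e * (dl k a * y b + dl k b * y a - dl k a * y a - dl k b * y b)).
    { intros k Hk. unfold cc. rewrite gen by auto. field. lra. }
    assert (Hg : forall k, (k < n)%nat -> g k = dl k a * g a + dl k b * g b).
    { intros k Hk. destruct (Nat.eq_dec k a) as [->|Hka].
      - rewrite dl_refl, (dl_neq a b) by auto. ring.
      - destruct (Nat.eq_dec k b) as [->|Hkb].
        + rewrite dl_refl, (dl_neq b a) by auto. ring.
        + rewrite (dl_neq k a), (dl_neq k b) by auto. unfold g. rewrite Hcc by auto.
          rewrite (dl_neq k a), (dl_neq k b) by auto.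
          replace (y k + e * (0 * y b + 0 * y a - 0 * y a - 0 * y b)) with (y k) by ring. ring. }
    assert (Hsum : UU th n x y Pp - C0 th n x y = g a + g b).
    { unfold UU, C0. rewrite <- rsum_minus. fold g. rewrite (rsum_ext n g (fun k => g a * (dl k a * 1) + g b * (dl k b * 1))).
      rewrite rsum_plus, !rsum_scal, !rsum_dl by auto. ring. intros. rewrite Hg by auto. ring. }
    assert (Hga : g a + g b < 0).
    { unfold g. rewrite !Hcc by auto. unfold dl. rewrite Nat.eqb_refl.
      replace (Nat.eqb a b) with false by (symmetry; apply Nat.eqb_neq; auto).
      replace (Nat.eqb b a) with false by (symmetry; apply Nat.eqb_neq; auto). rewrite Nat.eqb_refl.
      pose proof (four_strict th H (x b - y b) (x a - (y a + e * (1 * y b + 0 * y a - 1 * y a - 0 * y b)))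
        (x b - (y b + e * (0 * y b + 1 * y a - 0 * y a - 1 * y b))) (x a - y a)).
      assert (E1 : x a - (y a + e * (1 * y b + 0 * y a - 1 * y a - 0 * y b)) = (x a - y a) - e * D) by (unfold D; ring).
      assert (E2 : x b - (y b + e * (0 * y b + 1 * y a - 0 * y a - 1 * y b)) = (x b - y b) + e * D) by (unfold D; ring).
      rewrite E1, E2 in *. assert (th (x a - y a - e * D) + th (x b - y b + e * D) < th (x b - y b) + th (x a - y a)) by (apply H0; lra).
      assert (0 < / INR n) by (apply Rinv_0_lt_compat; auto). nra. }
    lra.
Qed.

Theorem theorem2p7 (n : nat) (x y : nat -> R) (theta : R -> R)
  (Hn : (0 < n)%nat)
  (Hx : forall i j, (i <= j)%nat -> (j < n)%nat -> x i <= x j)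
  (Hy : forall i j, (i <= j)%nat -> (j < n)%nat -> y i <= y j)
  (Htheta : strictly_convex_cost theta) :
  (forall i j, (i <= j)%nat -> (j < n)%nat -> x i - y i <= x j - y j)
  <->
  (exists m, is_inf (weak_values theta n x y) m /\
             is_inf (classical_values theta n x y) m).
Proof.
  split.
  - intros Hm. exists (C0 theta n x y). split; split.
    + intros s [P [HP ->]]. apply weak_ge; auto.
    + intros b Hb. apply Rle_trans with (weak_cost theta n x y (Pid n)).
      apply Hb. exists (Pid n). split; auto. apply Pid_coupling; auto.
      rewrite <- (U_Pid theta n x y Hn). apply weak_le_U; auto.
    + intros s [P [HP ->]]. apply classical_ge; auto.
    + intros b Hb. rewrite <- (classical_Pid theta Htheta n x y). apply Hb.
      exists (Pid n). split; auto. apply Pid_coupling; auto.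
  - intros [m [[Wl Wg] [Cl Cg]]].
    assert (HC : C0 theta n x y <= m).
    { apply Cg. intros s [P [HP ->]]. apply classical_ge; auto. }
    apply (mono_consec n (fun k => x k - y k)). intros k Hk.
    destruct (Rle_dec (x k - y k) (x (S k) - y (S k))) as [r|r]; auto.
    exfalso. destruct (perturb theta Htheta n x y k Hn Hx Hy Hk ltac:(lra)) as [P [HP HU]].
    pose proof (weak_le_U theta Htheta n x y P Hn).
    assert (m <= weak_cost theta n x y P) by (apply Wl; exists P; auto).
    lra.
Qed.
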